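(* Let $S$ be epsilon-strongly graded and let $r,s\in B(\mathcal{E}_G)^*$ be distinct epsilon-central elements. Then: (i) $(rS_g)(rS_h)=rS_{gh}$ for all $g,h\in N(r)$; in particular $rS=\bigoplus_{g\in N(r)}rS_g$ (with $rS_g=0$ for $g\notin N(r)$), and $rS$ is a strongly $N(r)$-graded ring with identity $r$; (ii) with $N=N(r)\cap N(s)$, the ring $(rS)_N\oplus(sS)_N$, where $(rS)_N=\bigoplus_{g\in N}rS_g$ and $(sS)_N=\bigoplus_{g\in N}sS_g$, is strongly $N$-graded (with components $rS_g\oplus sS_g$, $g\in N$) and has identity $r+s$.
   Context: $G$ is a group with identity $e$; $S=\bigoplus_{g\in G}S_g$ is an associative unital ring graded by $G$, $R=S_e$, $XY$ denotes finite sums of products. $S$ is epsilon-strongly graded: each ideal $S_gS_{g^{-1}}$ of $R$ has an identity $\epsilon_g$ with $\epsilon_gs=s=s\epsilon_{g^{-1}}$ for $s\in S_g$; $\epsilon_e=1$; each $\epsilon_g$ is an idempotent in $Z(R)$. $B(\mathcal{E}_G)$ is the multiplicative semigroup generated by $\{\epsilon_g:g\in G\}$, $B(\mathcal{E}_G)^*=B(\mathcal{E}_G)\setminus\{0\}$, ordered by $a\le b$ iff $a=ab$. For $r\in B(\mathcal{E}_G)^*$, $N(r)=\{g\in G:r\epsilon_g=r\}$. An element $r\in B(\mathcal{E}_G)^*$ is epsilon-central if it is minimal in $B(\mathcal{E}_G)^*$ and $N(r)$ is a subgroup of $G$ (equivalently, for minimal $r$, $r$ lies in the center of $S$). A ring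 graded by a group $H$ is strongly $H$-graded if $A_gA_h=A_{gh}$ for all $g,h\in H$. *)

(* Defs.v *)
From HB Require Import structures.
From mathcomp Require Import all_boot all_algebra.
Set Implicit Arguments.
Unset Strict Implicit.
Unset Printing Implicit Defensive.
Import GRing.Theory.
Local Open Scope ring_scope.

Section Defs.
Variables (G : groupType) (S : pzRingType).

Definition prodset (X Y : S -> Prop) : S -> Prop :=
  fun z => exists n (a b : 'I_n -> S),
    (forall i, X (a i) /\ Y (b i)) /\ z = \sum_(i < n) a i * b i.

Definition lmulset (r : S) (X : S -> Prop) : S -> Prop :=
  fun z => exists x, X x /\ z = r * x.

Definition additive_subgroup (A : S -> Prop) : Prop :=
  A 0 /\ (forall x y, A x -> A y -> A (x - y)).

Definition is_grading (H : G -> Prop) (A : S -> Prop) (A_ : G -> S -> Prop)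
  : Prop :=
  [/\ (forall g, H g -> additive_subgroup (A_ g) /\ (forall x, A_ g x -> A x)),
      (forall x, A x -> exists n (gs : 'I_n -> G) (xs : 'I_n -> S),
          (forall i, H (gs i) /\ A_ (gs i) (xs i)) /\ x = \sum_(i < n) xs i),
      (forall n (gs : 'I_n -> G) (xs : 'I_n -> S), injective gs ->
          (forall i, H (gs i) /\ A_ (gs i) (xs i)) ->
          \sum_(i < n) xs i = 0 -> forall i, xs i = 0) &
      (forall g h x y, H g -> H h -> A_ g x -> A_ h y -> A_ (g * h)%g (x * y))].

Definition graded (S_ : G -> S -> Prop) : Prop :=
  is_grading (fun _ => True) (fun _ => True) S_.

Definition strongly_graded_ring_with_id (H : G -> Prop) (A : S -> Prop)
  (A_ : G -> S -> Prop) (u : S) : Prop :=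
  [/\ additive_subgroup A /\ (forall x y, A x -> A y -> A (x * y)),
      A u /\ (forall x, A x -> u * x = x /\ x * u = x),
      is_grading H A A_ &
      (forall g h, H g -> H h ->
         forall z, prodset (A_ g) (A_ h) z <-> A_ (g * h)%g z)].

Definition eps_strongly_graded (S_ : G -> S -> Prop) (eps : G -> S) : Prop :=
  forall g,
    [/\ prodset (S_ g) (S_ (g^-1)%g) (eps g),
        (forall x, prodset (S_ g) (S_ (g^-1)%g) x -> eps g * x = x /\ x * eps g = x) &
        (forall x, S_ g x -> eps g * x = x /\ x * eps (g^-1)%g = x)].

(* B(E_G): multiplicative semigroup generated by the eps g *)
Definition inB (eps : G -> S) (x : S) : Prop :=
  exists gs : seq G, (0 < size gs)%N /\ x = \prod_(g <- gs) eps g.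

Definition inBstar (eps : G -> S) (x : S) : Prop := inB eps x /\ x <> 0.

Definition leB (a b : S) : Prop := a = a * b.

Definition minimalB (eps : G -> S) (r : S) : Prop :=
  inBstar eps r /\ (forall a, inBstar eps a -> leB a r -> a = r).

Definition Nset (eps : G -> S) (r : S) : G -> Prop := fun g => r * eps g = r.

Definition is_subgroup (H : G -> Prop) : Prop :=
  [/\ H 1%g, (forall g h, H g -> H h -> H (g * h)%g) & (forall g, H g -> H (g^-1)%g)].

Definition eps_central (eps : G -> S) (r : S) : Prop :=
  minimalB eps r /\ is_subgroup (Nset eps r).

(* (rS)_N = \bigoplus_{g in N} r S_g, as the set of finite sums *)
Definition restr_part (S_ : G -> S -> Prop) (r : S) (N : G -> Prop) : S -> Prop :=
  fun z => exists n (gs : 'I_n -> G) (xs : 'I_n -> S),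
    (forall i, N (gs i) /\ S_ (gs i) (xs i)) /\ z = \sum_(i < n) r * xs i.

End Defs.

(* Main.v *)
Require Import Defs.
From HB Require Import structures.
From mathcomp Require Import all_boot all_algebra.
From Stdlib Require Import ClassicalEpsilon.
Import GRing.Theory.
Set Implicit Arguments.
Unset Strict Implicit.
Unset Printing Implicit Defensive.
Local Open Scope ring_scope.

Section Sums.
Variable S : pzRingType.

Definition sumset (P : S -> Prop) (z : S) : Prop :=
  exists n (xs : 'I_n -> S), (forall i, P (xs i)) /\ z = \sum_(i < n) xs i.

Definition catf (T : Type) n m (F : 'I_n -> T) (F' : 'I_m -> T) : 'I_(n + m) -> T :=
  fun i => match split i with inl j => F j | inr k => F' k end.

Lemma catf_l T n m (F : 'I_n -> T) (F' : 'I_m -> T) j : catf F F' (lshift m j) = F j.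
Proof. by rewrite /catf -[lshift m j]/(unsplit (inl j)) unsplitK. Qed.
Lemma catf_r T n m (F : 'I_n -> T) (F' : 'I_m -> T) j : catf F F' (rshift n j) = F' j.
Proof. by rewrite /catf -[rshift n j]/(unsplit (inr j)) unsplitK. Qed.

Lemma catf_P T U (P : T -> U -> Prop) n m (F : 'I_n -> T) (H : 'I_n -> U)
   (F' : 'I_m -> T) (H' : 'I_m -> U) :
  (forall i, P (F i) (H i)) -> (forall i, P (F' i) (H' i)) ->
  forall i, P (catf F F' i) (catf H H' i).
Proof. by move=> H1 H2 i; rewrite /catf; case: (split i). Qed.

Lemma catf_sum n m (F : 'I_n -> S) (F' : 'I_m -> S) :
  \sum_(i < n + m) catf F F' i = \sum_(i < n) F i + \sum_(i < m) F' i.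
Proof.
rewrite big_split_ord; congr (_ + _); apply: eq_bigr => i _;
  by rewrite ?catf_l ?catf_r.
Qed.

Lemma sumset0 P : sumset P 0.
Proof. by exists 0%N, (fun _ => 0); split => [[]//|]; rewrite big_ord0. Qed.

Lemma sumset1 (P : S -> Prop) x : P x -> sumset P x.
Proof. by move=> Px; exists 1%N, (fun _ => x); split => //; rewrite big_ord1. Qed.

Lemma sumsetD P a b : sumset P a -> sumset P b -> sumset P (a + b).
Proof.
move=> [n [xs [Hx ->]]] [m [ys [Hy ->]]].
exists (n + m)%N, (catf xs ys); split; last by rewrite catf_sum.
move=> i; have := @catf_P S S (fun x _ => P x) n m xs xs ys ys.
by apply => // j.
Qed.

Lemma sumset_big P n (F : 'I_n -> S) : (forall i, sumset P (F i)) ->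
  sumset P (\sum_(i < n) F i).
Proof.
move=> H; apply: (big_ind (sumset P)); [exact: sumset0| exact: sumsetD| by []].
Qed.

Lemma sumset_ind (P Q : S -> Prop) : Q 0 -> (forall x, P x -> Q x) ->
  (forall a b, Q a -> Q b -> Q (a + b)) -> forall z, sumset P z -> Q z.
Proof.
move=> H0 H1 H2 z [n [xs [Hx ->]]]; apply: (big_ind Q) => // i _; exact: H1.
Qed.

Lemma sumset_mono (P Q : S -> Prop) z : (forall x, P x -> Q x) -> sumset P z -> sumset Q z.
Proof. by move=> H [n [xs [Hx ->]]]; exists n, xs; split => // i; apply: H. Qed.

Lemma fchoice T n (R : 'I_n -> T -> Prop) : (forall i, exists x, R i x) ->
  exists f : 'I_n -> T, forall i, R i (f i).
Proof.
move=> H; exists (fun i => proj1_sig (constructive_indefinite_description _ (H i))).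
by move=> i; case: constructive_indefinite_description.
Qed.

Lemma sumsetN (P : S -> Prop) z : (forall x, P x -> P (- x)) -> sumset P z -> sumset P (- z).
Proof.
move=> H [n [xs [Hx ->]]]; exists n, (fun i => - xs i); split; first by move=> i; apply: H.
by rewrite sumrN.
Qed.

Lemma sumsetM (P : S -> Prop) a b : (forall x y, P x -> P y -> P (x * y)) ->
  sumset P a -> sumset P b -> sumset P (a * b).
Proof.
move=> H [n [xs [Hx ->]]] [m [ys [Hy ->]]]; rewrite mulr_suml.
apply: sumset_big => i; rewrite mulr_sumr; apply: sumset_big => j.
apply: sumset1; exact: H.
Qed.

End Sums.

Section Graded.
Variables (G : groupType) (S : pzRingType) (S_ : G -> S -> Prop) (eps : G -> S).
Hypothesis Hgr : graded S_.
Hypothesis Heps : eps_strongly_graded S_ eps.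

Lemma Sadd g : additive_subgroup (S_ g).
Proof. by case: Hgr => H _ _ _; case: (H g I). Qed.
Lemma S0 g : S_ g 0. Proof. by case: (Sadd g). Qed.
Lemma SB g x y : S_ g x -> S_ g y -> S_ g (x - y). Proof. by case: (Sadd g) => _; apply. Qed.
Lemma SN g x : S_ g x -> S_ g (- x).
Proof. by move=> Hx; rewrite -sub0r; apply: SB => //; apply: S0. Qed.
Lemma SD g x y : S_ g x -> S_ g y -> S_ g (x + y).
Proof. by move=> Hx Hy; rewrite -[y]opprK; apply: SB => //; apply: SN. Qed.
Lemma Ssum g n (F : 'I_n -> S) : (forall i, S_ g (F i)) -> S_ g (\sum_(i < n) F i).
Proof. by move=> H; apply: (big_ind (S_ g)); [apply: S0|apply: SD|]. Qed.
Lemma Smul g h x y : S_ g x -> S_ h y -> S_ (g * h)%g (x * y).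
Proof. by case: Hgr => _ _ _ H; apply: H. Qed.
Lemma Sdec x : exists n (gs : 'I_n -> G) (xs : 'I_n -> S),
  (forall i, S_ (gs i) (xs i)) /\ x = \sum_(i < n) xs i.
Proof.
case: Hgr => _ H _ _; case: (H x I) => n [gs [xs [Hi E]]].
by exists n, gs, xs; split => // i; case: (Hi i).
Qed.
Lemma Sind n (gs : 'I_n -> G) (xs : 'I_n -> S) : injective gs ->
  (forall i, S_ (gs i) (xs i)) -> \sum_(i < n) xs i = 0 -> forall i, xs i = 0.
Proof. move=> Hi Hx Hs; case: Hgr => _ _ H _; apply: (H n gs xs Hi) => // i; split => //; exact: Hx. Qed.

Lemma Strans g h x : S_ g x -> g = h -> S_ h x. Proof. by move=> H <-. Qed.

Lemma prod_sub g h z : prodset (S_ g) (S_ h) z -> S_ (g * h)%g z.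
Proof.
move=> [n [a [b [Hab ->]]]]; apply: Ssum => i; case: (Hab i) => ??; exact: Smul.
Qed.

Lemma eps_S1 g : S_ 1%g (eps g).
Proof.
case: (Heps g) => H _ _; apply: Strans (prod_sub H) _; by rewrite mulgV.
Qed.

Lemma eps_idem g : eps g * eps g = eps g.
Proof. case: (Heps g) => H1 H2 _; by case: (H2 _ H1). Qed.

Lemma eps_comm g y : S_ 1%g y -> eps g * y = y * eps g.
Proof.
move=> Hy; case: (Heps g) => [[n [a [b [Hab E]]]] H2 _].
have P1 : prodset (S_ g) (S_ (g^-1)%g) (eps g * y).
  exists n, a, (fun i => b i * y); split.
    move=> i; case: (Hab i) => Ha Hb; split => //; apply: Strans (Smul Hb Hy) _; by rewrite mulg1.
  by rewrite E mulr_suml; apply: eq_bigr => i _; rewrite mulrA.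
have P2 : prodset (S_ g) (S_ (g^-1)%g) (y * eps g).
  exists n, (fun i => y * a i), b; split.
    move=> i; case: (Hab i) => Ha Hb; split => //; apply: Strans (Smul Hy Ha) _; by rewrite mul1g.
  by rewrite E mulr_sumr; apply: eq_bigr => i _; rewrite mulrA.
case: (H2 _ P1) => _ <-; case: (H2 _ P2) => <- _; by rewrite mulrA.
Qed.

Lemma eps_shift g h x : S_ g x -> x * eps h = eps (g * h)%g * x.
Proof.
move=> Hx.
have E1 : eps (g * h)%g * (x * eps h) = x * eps h.
  case: (Heps h) => [[n [a [b [Hab E]]]] _ _].
  rewrite E !mulr_sumr; apply: eq_bigr => i _; case: (Hab i) => Ha Hb.
  case: (Heps (g * h)%g) => _ _ H3; case: (H3 _ (Smul Hx Ha)) => H4 _.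
  by rewrite !mulrA -(mulrA _ x) H4.
have E2 : eps (g * h)%g * x * eps h = eps (g * h)%g * x.
  case: (Heps (g * h)%g) => [[n [a [b [Hab E]]]] _ _].
  rewrite E !mulr_suml; apply: eq_bigr => i _; case: (Hab i) => Ha Hb.
  have Hbx : S_ (h^-1)%g (b i * x).
    apply: Strans (Smul Hb Hx) _; by rewrite invgM -mulgA mulVg mulg1.
  case: (Heps (h^-1)%g) => _ _ H3; case: (H3 _ Hbx) => _; rewrite invgK => H4.
  by rewrite -!mulrA (mulrA (b i)) H4.
by rewrite -E1 mulrA E2.
Qed.

Definition P (l : seq G) := \prod_(h <- l) eps h.

Lemma P_comm y l : S_ 1%g y -> y * P l = P l * y.
Proof.
move=> Hy; elim: l => [|x l IH]; first by rewrite /P big_nil mulr1 mul1r.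
by rewrite /P big_cons -/(P l) mulrA -eps_comm // -mulrA IH mulrA.
Qed.

Lemma S_mulP g y l : S_ g y -> S_ g (y * P l).
Proof.
elim: l y => [|x l IH] y Hy; first by rewrite /P big_nil mulr1.
rewrite /P big_cons -/(P l) mulrA; apply: IH.
apply: Strans (Smul Hy (eps_S1 x)) _; by rewrite mulg1.
Qed.

Lemma P_S1 l : (0 < size l)%N -> S_ 1%g (P l).
Proof.
case: l => // x l _; rewrite /P big_cons -/(P l); apply: S_mulP; exact: eps_S1.
Qed.

Lemma P_fix r l : (forall h, h \in l -> r * eps h = r) -> r * P l = r.
Proof.
elim: l => [|x l IH] H; first by rewrite /P big_nil mulr1.
rewrite /P big_cons -/(P l) mulrA H ?mem_head // IH // => h hl.
by apply: H; rewrite in_cons hl orbT.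
Qed.

Lemma P_mem l h : h \in l -> P l * eps h = P l.
Proof.
elim: l => [|x l IH] //; rewrite in_cons => /orP [/eqP ->|hl].
  by rewrite /P big_cons -/(P l) -mulrA -(P_comm _ (eps_S1 x)) mulrA eps_idem.
by rewrite /P big_cons -/(P l) -mulrA IH.
Qed.

Lemma P_idem l : P l * P l = P l.
Proof. by apply: P_fix => h hl; apply: P_mem. Qed.

Lemma P_cat l l' : P (l ++ l') = P l * P l'.
Proof. by rewrite /P big_cat. Qed.

Lemma shiftP g x l : S_ g x -> x * P l = P (map (fun h => g * h)%g l) * x.
Proof.
move=> Hx; elim: l => [|y l IH]; first by rewrite /P big_nil mulr1 mul1r.
by rewrite /= /P !big_cons -!/(P _) mulrA (eps_shift _ Hx) -mulrA IH mulrA.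
Qed.

End Graded.

Section Central.
Variables (G : groupType) (S : pzRingType) (S_ : G -> S -> Prop) (eps : G -> S).
Hypothesis Hgr : graded S_.
Hypothesis Heps : eps_strongly_graded S_ eps.
Variable r : S.
Hypothesis Hr : eps_central eps r.

Lemma r_P : exists l, (0 < size l)%N /\ r = P eps l.
Proof. by case: Hr => [[[[l [Hl E]] _] _] _]; exists l. Qed.

Lemma r_S1 : S_ 1%g r.
Proof. case: r_P => l [Hl ->]; exact: (P_S1 Hgr Heps). Qed.

Lemma r_idem : r * r = r.
Proof. case: r_P => l [Hl ->]; exact: (P_idem Hgr Heps). Qed.

Lemma r_sub : is_subgroup (Nset eps r).
Proof. by case: Hr. Qed.

Lemma r_zero g : ~ Nset eps r g -> r * eps g = 0.
Proof.
move=> Hn; case: (eqVneq (r * eps g) 0) => // Hne; exfalso; apply: Hn.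
case: Hr => [[_ Hmin] _]; apply: Hmin; last first.
  rewrite /leB -mulrA (eps_comm Hgr Heps _ r_S1) mulrA r_idem //.
split; last by apply/eqP.
case: r_P => l [Hl ->]; exists (l ++ [:: g]); split; first by rewrite size_cat addn_gt0 Hl.
by rewrite -/(P eps _) P_cat /P big_seq1.
Qed.

Lemma r_comm_hom g x : S_ g x -> r * x = x * r.
Proof.
move=> Hx; case: r_sub => H1 HM HV.
case: (eqVneq (r * eps g) r) => HN.
  case: r_P => l [Hl Er].
  have Hl' : forall h, h \in l -> Nset eps r h.
    by move=> h hl; rewrite /Nset Er; apply: (P_mem Hgr Heps).
  set r1 := P eps (map (fun h => g * h)%g l).
  set r2 := P eps (map (fun h => g^-1 * h)%g l).
  have E1 : x * r = r1 * x by rewrite {1}Er (shiftP Hgr Heps _ Hx).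
  have E2 : r * x = x * r2.
    rewrite (shiftP Hgr Heps _ Hx) -map_comp Er; congr (_ * _); congr (P _ _).
    by rewrite -[LHS]map_id; apply: eq_map => h /=; rewrite mulVKg.
  have F1 : r * r1 = r.
    apply: P_fix => h /mapP [h' h'l ->]; apply: HM => //; exact: Hl'.
  have F2 : r * r2 = r.
    apply: P_fix => h /mapP [h' h'l ->]; apply: HM; [apply: HV|exact: Hl'] => //.
  have G1 : r * x * r = r * x by rewrite -mulrA E1 mulrA F1.
  have G2 : r * x * r = x * r.
    rewrite E2 -mulrA -(P_comm Hgr Heps _ r_S1) F2 //.
  by rewrite -G1 G2.
have HN' : ~ Nset eps r g by move=> H; rewrite H eqxx in HN.
have HNV : ~ Nset eps r (g^-1)%g by move=> H; apply: HN'; rewrite -(invgK g); apply: HV.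
case: (Heps g) => _ _ Hh; case: (Hh _ Hx) => Ex Ex'.
have A1 : r * x = 0 by rewrite -Ex mulrA r_zero // mul0r.
have A2 : x * r = 0 by rewrite -Ex' -mulrA (eps_comm Hgr Heps _ r_S1) r_zero // mulr0.
by rewrite A1 A2.
Qed.

Lemma r_central z : r * z = z * r.
Proof.
case: (Sdec Hgr z) => n [gs [xs [Hx ->]]]; rewrite mulr_sumr mulr_suml.
by apply: eq_bigr => i _; apply: r_comm_hom (Hx i).
Qed.

Lemma r_kill g x : ~ Nset eps r g -> S_ g x -> r * x = 0.
Proof.
move=> Hn Hx; case: (Heps g) => _ _ Hh; case: (Hh _ Hx) => Ex _.
by rewrite -Ex mulrA r_zero // mul0r.
Qed.

Lemma r_hom g x : S_ g x -> S_ g (r * x).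
Proof. move=> Hx; apply: Strans (Smul Hgr r_S1 Hx) _; by rewrite mul1g. Qed.

End Central.

Section PartI.
Variables (G : groupType) (S : pzRingType) (S_ : G -> S -> Prop) (eps : G -> S).
Hypothesis Hgr : graded S_.
Hypothesis Heps : eps_strongly_graded S_ eps.
Variable r : S.
Hypothesis Hr : eps_central eps r.

Let rc := r_central Hgr Heps Hr.
Let ri := r_idem Hgr Heps Hr.

Lemma rr x y : r * x * (r * y) = r * (x * y).
Proof. by rewrite -mulrA (mulrA x) -rc !mulrA ri. Qed.

Lemma partIa g h : Nset eps r g -> Nset eps r h ->
      forall z, prodset (lmulset r (S_ g)) (lmulset r (S_ h)) z <->
                lmulset r (S_ (g * h)%g) z.
Proof.
move=> Hg Hh z; split.
  move=> [n [a [b [Hab Ez]]]]; exists z; split.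
    apply: (prod_sub Hgr); exists n, a, b; split => // i.
    case: (Hab i) => [[x [Hx ->]] [y [Hy ->]]]; split; exact: (r_hom Hgr Heps Hr).
  rewrite Ez mulr_sumr; apply: eq_bigr => i _.
  by case: (Hab i) => [[x [Hx ->]] _]; rewrite !mulrA ri.
move=> [x [Hx ->]].
case: (Heps g) => [[n [a [b [Hab E]]]] _ _].
exists n, (fun i => r * a i), (fun i => r * (b i * x)); split.
  move=> i; case: (Hab i) => Ha Hb; split; [exists (a i)|exists (b i * x)]; split => //.
  apply: Strans (Smul Hgr Hb Hx) _; by rewrite mulKg.
rewrite (eq_bigr (fun i => r * (a i * b i) * x)); last by move=> i _; rewrite rr !mulrA.
by rewrite -mulr_suml -mulr_sumr -E Hg.
Qed.

Lemma partIc : strongly_graded_ring_with_id (Nset eps r) (lmulset r (fun _ => True))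
        (fun g => lmulset r (S_ g)) r.
Proof.
case: (r_sub Hr) => H1 HM HV.
split.
- split; first split.
  + by exists 0; split => //; rewrite mulr0.
  + by move=> ? ? [x [_ ->]] [y [_ ->]]; exists (x - y); split => //; rewrite mulrBr.
  + by move=> ? ? [x [_ ->]] [y [_ ->]]; exists (x * (r * y)); split => //; rewrite !mulrA.
- split; first by exists 1; split => //; rewrite mulr1.
  by move=> ? [y [_ ->]]; rewrite mulrA ri -rc mulrA ri.
- split.
  + move=> g Hg; split; last by move=> ? [x [_ ->]]; exists x.
    split; first by exists 0; split; [apply: (S0 Hgr)|rewrite mulr0].
    move=> ? ? [x [Hx ->]] [y [Hy ->]]; exists (x - y); split; last by rewrite mulrBr.
    exact: (SB Hgr).
  + move=> ? [y [_ ->]]; case: (Sdec Hgr y) => n [gs [xs [Hx ->]]].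
    exists n, (fun i => if r * eps (gs i) == r then gs i else 1%g), (fun i => r * xs i).
    split; last by rewrite mulr_sumr.
    move=> i; case: eqP => Hn.
      by split => //; exists (xs i).
    split => //; exists 0; split; first exact: (S0 Hgr).
    by rewrite mulr0 (r_kill Hgr Heps Hr Hn (Hx i)).
  + move=> n gs xs Hinj Hx Hs; apply: (Sind Hgr Hinj _ Hs) => i.
    by case: (Hx i) => _ [y [Hy ->]]; apply: (r_hom Hgr Heps Hr).
  + move=> g h _ _ ? ? [x [Hx ->]] [y [Hy ->]]; exists (x * y); split; first exact: (Smul Hgr).
    by rewrite rr.
- exact: partIa.
Qed.

End PartI.

Section PartII.
Variables (G : groupType) (S : pzRingType) (S_ : G -> S -> Prop) (eps : G -> S).
Hypothesis Hgr : graded S_.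
Hypothesis Heps : eps_strongly_graded S_ eps.
Variables r s : S.
Hypothesis Hr : eps_central eps r.
Hypothesis Hs : eps_central eps s.
Hypothesis Hrs : r <> s.

Let rc := r_central Hgr Heps Hr.
Let ri := r_idem Hgr Heps Hr.
Let sc := r_central Hgr Heps Hs.
Let si := r_idem Hgr Heps Hs.

Lemma rs0 : r * s = 0.
Proof.
case: (eqVneq (r * s) 0) => // Hne; exfalso; apply: Hrs.
have HB : inBstar eps (r * s).
  split; last by apply/eqP.
  case: (r_P Hr) => l [Hl El]; case: (r_P Hs) => l' [Hl' El'].
  exists (l ++ l'); split; first by rewrite size_cat addn_gt0 Hl.
  by rewrite -/(P eps _) P_cat -El -El'.
case: Hr => [[_ Hmr] _]; case: Hs => [[_ Hms] _].
have E1 : r * s = r.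
  by apply: Hmr => //; rewrite /leB -mulrA -rc mulrA ri.
have E2 : r * s = s.
  by apply: Hms => //; rewrite /leB -mulrA si.
by rewrite -E1 E2.
Qed.

Lemma sr0 : s * r = 0.
Proof. by rewrite -rc rs0. Qed.

Lemma mix x y x' y' : (r * x + s * y) * (r * x' + s * y') = r * (x * x') + s * (y * y').
Proof.
rewrite mulrDl !mulrDr.
have A1 : forall a b, r * a * (r * b) = r * (a * b).
  by move=> a b; rewrite -mulrA (mulrA a) -rc !mulrA ri.
have A2 : forall a b, s * a * (s * b) = s * (a * b).
  by move=> a b; rewrite -mulrA (mulrA a) -sc !mulrA si.
have A3 : forall a b, r * a * (s * b) = 0.
  by move=> a b; rewrite -mulrA (mulrA a) -sc !mulrA rs0 !mul0r.
have A4 : forall a b, s * a * (r * b) = 0.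
  by move=> a b; rewrite -mulrA (mulrA a) -rc !mulrA sr0 !mul0r.
by rewrite A1 A2 A3 A4 addr0 add0r.
Qed.

Lemma mix_r x y : r * (r * x + s * y) = r * x.
Proof. by rewrite mulrDr !mulrA ri rs0 mul0r addr0. Qed.
Lemma mix_s x y : s * (r * x + s * y) = s * y.
Proof. by rewrite mulrDr !mulrA si sr0 mul0r add0r. Qed.

Definition NN := fun g => Nset eps r g /\ Nset eps s g.
Definition AA_ g z := exists x y, [/\ S_ g x, S_ g y & z = r * x + s * y].
Definition AA z := exists a b,
  [/\ restr_part S_ r NN a, restr_part S_ s NN b & z = a + b].
Definition QQ w := exists g, NN g /\ AA_ g w.

Lemma restr_sumset t z : restr_part S_ t NN z <->
  sumset (fun w => exists g x, [/\ NN g, S_ g x & w = t * x]) z.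
Proof.
split.
  move=> [n [gs [xs [H ->]]]]; exists n, (fun i => t * xs i); split => // i.
  by exists (gs i), (xs i); case: (H i).
move=> [n [ws [Hw ->]]].
have [gs Hg] : exists gs : 'I_n -> G, forall i, exists x, [/\ NN (gs i), S_ (gs i) x & ws i = t * x].
  by apply: (@fchoice G n (fun i (g : G) => exists x, [/\ NN g, S_ g x & ws i = t * x])) => i; case: (Hw i) => g [x H]; exists g, x.
case: (@fchoice _ _ (fun i x => [/\ NN (gs i), S_ (gs i) x & ws i = t * x]) Hg) => xs Hx.
exists n, gs, xs; split; first by move=> i; case: (Hx i).
by apply: eq_bigr => i _; case: (Hx i).
Qed.

Lemma NN1 : NN 1%g.
Proof. by case: (r_sub Hr) => ???; case: (r_sub Hs) => ???. Qed.
Lemma NNM g h : NN g -> NN h -> NN (g * h)%g.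
Proof. by case: (r_sub Hr) => _ H _; case: (r_sub Hs) => _ H' _ [??] [??]; split; auto. Qed.

Lemma AA_sumset z : AA z <-> sumset QQ z.
Proof.
split.
  move=> [a [b [/restr_sumset Ha /restr_sumset Hb ->]]]; apply: sumsetD.
    apply: sumset_mono Ha => w [g [x [Hg Hx ->]]]; exists g; split => //.
    by exists x, 0; split => //; [apply: (S0 Hgr)|rewrite mulr0 addr0].
  apply: sumset_mono Hb => w [g [x [Hg Hx ->]]]; exists g; split => //.
  by exists 0, x; split => //; [apply: (S0 Hgr)|rewrite mulr0 add0r].
apply: sumset_ind.
- exists 0, 0; split; [| |by rewrite addr0];
  by exists 0%N, (fun _ => 1%g), (fun _ => 0); split => [[]//|]; rewrite big_ord0.
- move=> w [g [Hg [x [y [Hx Hy ->]]]]]; exists (r * x), (s * y); split => //.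
    by exists 1%N, (fun _ => g), (fun _ => x); split => //; rewrite big_ord1.
  by exists 1%N, (fun _ => g), (fun _ => y); split => //; rewrite big_ord1.
- move=> _ _ [a [b [Ha Hb ->]]] [a' [b' [Ha' Hb' ->]]].
  exists (a + a'), (b + b'); split.
  + by apply/restr_sumset; apply: sumsetD; apply/restr_sumset.
  + by apply/restr_sumset; apply: sumsetD; apply/restr_sumset.
  + by rewrite addrACA.
Qed.

Lemma AA_add g : additive_subgroup (AA_ g).
Proof.
split; first by exists 0, 0; split; [apply: (S0 Hgr)|apply: (S0 Hgr)|rewrite !mulr0 addr0].
move=> ? ? [x [y [Hx Hy ->]]] [x' [y' [Hx' Hy' ->]]].
exists (x - x'), (y - y'); split; try exact: (SB Hgr).
by rewrite !mulrBr opprD addrACA.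
Qed.

Lemma AA_mul g h a b : AA_ g a -> AA_ h b -> AA_ (g * h)%g (a * b).
Proof.
move=> [x [y [Hx Hy ->]]] [x' [y' [Hx' Hy' ->]]]; rewrite mix.
by exists (x * x'), (y * y'); split => //; apply: (Smul Hgr).
Qed.

Lemma AA_sum g n (F : 'I_n -> S) : (forall i, AA_ g (F i)) -> AA_ g (\sum_(i < n) F i).
Proof.
move=> H; have [H0 HBB] := AA_add g.
have HD : forall x y, AA_ g x -> AA_ g y -> AA_ g (x + y).
  move=> x y Hx Hy; rewrite -[y]opprK -[- y]sub0r.
  by apply: (HBB) => //; apply: (HBB).
by apply: (big_ind (AA_ g)).
Qed.

Lemma partII1 a b : restr_part S_ r NN a -> restr_part S_ s NN b -> a + b = 0 ->
      a = 0 /\ b = 0.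
Proof.
move=> [n [gs [xs [_ ->]]]] [m [hs [ys [_ ->]]]] E.
have Ra : r * (\sum_(i < n) r * xs i) = \sum_(i < n) r * xs i.
  by rewrite mulr_sumr; apply: eq_bigr => i _; rewrite mulrA ri.
have Sa : s * (\sum_(i < n) r * xs i) = 0.
  by rewrite mulr_sumr; apply: big1 => i _; rewrite mulrA sr0 mul0r.
have Rb : r * (\sum_(i < m) s * ys i) = 0.
  by rewrite mulr_sumr; apply: big1 => i _; rewrite mulrA rs0 mul0r.
have Sb : s * (\sum_(i < m) s * ys i) = \sum_(i < m) s * ys i.
  by rewrite mulr_sumr; apply: eq_bigr => i _; rewrite mulrA si.
have := mulrDr r (\sum_(i < n) r * xs i) (\sum_(i < m) s * ys i).
have := mulrDr s (\sum_(i < n) r * xs i) (\sum_(i < m) s * ys i).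
rewrite E Ra Rb Sa Sb !mulr0 addr0 add0r => <- <-; by split.
Qed.

Lemma partII2 : strongly_graded_ring_with_id NN AA AA_ (r + s).
Proof.
have QN : forall x, QQ x -> QQ (- x).
  move=> _ [g [Hg [x [y [Hx Hy ->]]]]]; exists g; split => //.
  by exists (- x), (- y); split; try exact: (SN Hgr); rewrite opprD -!mulrN.
have QM : forall x y, QQ x -> QQ y -> QQ (x * y).
  move=> x y [g [Hg Hx]] [h [Hh Hy]]; exists (g * h)%g; split; first exact: NNM.
  exact: AA_mul.
have rsE : r + s = r * 1 + s * 1 by rewrite !mulr1.
split.
- split; first split.
  + by apply/AA_sumset; apply: sumset0.
  + move=> x y /AA_sumset Hx /AA_sumset Hy; apply/AA_sumset.
    by apply: sumsetD => //; apply: sumsetN.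
  + move=> x y /AA_sumset Hx /AA_sumset Hy; apply/AA_sumset; exact: sumsetM.
- split.
    apply/AA_sumset; apply: sumset1; exists 1%g; split; first exact: NN1.
    exists r, s; split; [exact: (r_S1 Hgr Heps Hr)|exact: (r_S1 Hgr Heps Hs)|by rewrite ri si].
  move=> x /AA_sumset; apply: (sumset_ind (Q := fun z => (r + s) * z = z /\ z * (r + s) = z)).
  + by rewrite mulr0 mul0r.
  + move=> _ [g [_ [x' [y' [_ _ ->]]]]]; rewrite rsE !mix !mul1r !mulr1 //.
  + move=> a b [E1 E2] [E3 E4]; split; [by rewrite mulrDr E1 E3 | by rewrite mulrDl E2 E4].
- split.
  + move=> g Hg; split; first exact: AA_add.
    move=> x Hx; apply/AA_sumset; apply: sumset1; by exists g.
  + move=> x /AA_sumset [n [ws [Hw ->]]].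
    case: (@fchoice _ _ (fun i g => NN g /\ AA_ g (ws i)) Hw) => gs Hgs.
    by exists n, gs, ws; split.
  + move=> n gs xs Hinj Hx Hsum.
    have Hr0 : forall i, r * xs i = 0.
      apply: (Sind Hgr Hinj); last by rewrite -mulr_sumr Hsum mulr0.
      move=> i; case: (Hx i) => _ [x [y [Hx' _ ->]]]; rewrite mix_r.
      exact: (r_hom Hgr Heps Hr).
    have Hs0 : forall i, s * xs i = 0.
      apply: (Sind Hgr Hinj); last by rewrite -mulr_sumr Hsum mulr0.
      move=> i; case: (Hx i) => _ [x [y [_ Hy' ->]]]; rewrite mix_s.
      exact: (r_hom Hgr Heps Hs).
    move=> i; have := Hr0 i; have := Hs0 i.
    case: (Hx i) => _ [x [y [_ _ ->]]]; rewrite mix_r mix_s => -> ->.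
    by rewrite addr0.
  + move=> g h x y _ _; exact: AA_mul.
- move=> g h Hg Hh z; split.
    move=> [n [a [b [Hab ->]]]]; apply: AA_sum => i.
    by case: (Hab i) => ??; apply: AA_mul.
  move=> [x [y [Hx Hy ->]]].
  case: (Heps g) => [[n [a [b [Hab E]]]] _ _].
  exists n, (fun i => r * a i + s * a i), (fun i => r * (b i * x) + s * (b i * y)); split.
    move=> i; case: (Hab i) => Ha Hb; split.
      by exists (a i), (a i); split.
    exists (b i * x), (b i * y); split => //; apply: Strans (Smul Hgr Hb _) _;
      try eassumption; by rewrite mulKg.
  under eq_bigr => i _ do rewrite mix.
  rewrite big_split /= -!mulr_sumr.
  rewrite (eq_bigr (fun i => a i * b i * x)); last by move=> i _; rewrite mulrA.
  rewrite [X in _ = _ + s * X](eq_bigr (fun i => a i * b i * y)); last by move=> i _; rewrite mulrA.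
  rewrite -!mulr_suml -E !mulrA.
  by case: Hg => -> ->.
Qed.

End PartII.

Theorem mainTheorem9 (G : groupType) (S : pzRingType)
  (S_ : G -> S -> Prop) (eps : G -> S) (r s : S) :
  graded S_ -> eps_strongly_graded S_ eps ->
  eps_central eps r -> eps_central eps s -> r <> s ->
  (* (i) *)
  ((forall g h, Nset eps r g -> Nset eps r h ->
      forall z, prodset (lmulset r (S_ g)) (lmulset r (S_ h)) z <->
                lmulset r (S_ (g * h)%g) z)
   /\ (forall g, ~ Nset eps r g -> forall x, S_ g x -> r * x = 0)
   /\ strongly_graded_ring_with_id (Nset eps r) (lmulset r (fun _ => True))
        (fun g => lmulset r (S_ g)) r)
  /\
  (* (ii) *)
  (let N := fun g => Nset eps r g /\ Nset eps s g in
   (forall a b, restr_part S_ r N a -> restr_part S_ s N b -> a + b = 0 ->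
      a = 0 /\ b = 0)
   /\ strongly_graded_ring_with_id N
        (fun z => exists a b, [/\ restr_part S_ r N a, restr_part S_ s N b & z = a + b])
        (fun g z => exists x y, [/\ S_ g x, S_ g y & z = r * x + s * y])
        (r + s)).
Proof.
move=> Hgr Heps Hr Hs Hrs; split.
  split; first exact: (partIa Hgr Heps Hr).
  split; first by move=> g Hn x Hx; exact: (r_kill Hgr Heps Hr Hn Hx).
  exact: (partIc Hgr Heps Hr).
split; first exact: (partII1 Hgr Heps Hr Hs Hrs).
exact: (partII2 Hgr Heps Hr Hs Hrs).
Qed.
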